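(* Let $(X,\mathcal{F},\mu)$ be a probability space with $L^2(X,\mu)$ infinite dimensional, and let $P$ be a reversible Markov operator on $L^2(X,\mu)$. Then for every $k\geq1$, \[ h_P(k)+\overline{h}_P(k)\leq1. \]
   Context: A Markov operator is a linear operator $P:L^2(X,\mu)\to L^2(X,\mu)$ with $P1=1$ and $Pf\geq0$ whenever $f\geq0$; it is reversible if $\int_XgPf\,d\mu=\int_XfPg\,d\mu$ for all $f,g\in L^2(X,\mu)$. Write $(f,g)_\mu=\int_Xfg\,d\mu$, $1_A$ for the indicator of $A$, $\overline{S}=X\setminus S$. $h_P(k):=\inf\max_{1\leq i\leq k}\frac{(1_{S_i},P1_{\overline{S_i}})_\mu}{\mu(S_i)}$ over all collections of $k$ pairwise disjoint measurable sets with $\mu(S_i)>0$. $\overline{h}_P(k):=\sup\min_{1\leq i\leq k}\frac{2(1_{A_{2i-1}},P1_{A_{2i}})_\mu}{\mu(A_{2i-1}\cup A_{2i})}$ over all collections of $k$ pairs of measurable sets $(A_1,A_2),\ldots,(A_{2k-1},A_{2k})$, pairwise disjoint, with $\mu(A_{2i-1}\cup A_{2i})>0$ for each $i$. *)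

(* Defs.v *)
From HB Require Import structures.
From mathcomp Require Import all_boot all_order all_algebra.
From mathcomp Require Import all_classical all_reals all_analysis.
Set Implicit Arguments. Unset Strict Implicit. Unset Printing Implicit Defensive.
Import Order.TTheory GRing.Theory Num.Theory.
Import numFieldNormedType.Exports.
Local Open Scope classical_set_scope.
Local Open Scope ring_scope.

Section MarkovDefs.
Context {d : measure_display} {T : measurableType d} {R : realType}.
Variable mu : probability T R.

Definition L2 : {pred T -> R} := Lfun mu 2%:E.

Definition ip (f g : T -> R) : \bar R := (\int[mu]_x (f x * g x)%:E)%E.

Definition L2_infinite_dimensional : Prop :=
  forall n : nat, exists f : 'I_n -> T -> R,
    (forall i, f i \in L2) /\
    (forall c : 'I_n -> R,
        {ae mu, forall x, \sum_(i < n) c i * f i x = 0} -> forall i, c i = 0).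

(* P : L^2 -> L^2 given on representatives; it must be well defined on
   a.e.-classes, linear, P 1 = 1 and positivity preserving. *)
Definition markov_operator (P : (T -> R) -> (T -> R)) : Prop :=
  [/\ (forall f, f \in L2 -> P f \in L2),
      (forall f g, f \in L2 -> g \in L2 ->
         {ae mu, forall x, f x = g x} -> {ae mu, forall x, P f x = P g x}),
      (forall (a : R) f g, f \in L2 -> g \in L2 ->
         {ae mu, forall x, P (fun y => a * f y + g y) x = a * P f x + P g x}),
      {ae mu, forall x, P (cst 1) x = 1} &
      (forall f, f \in L2 -> {ae mu, forall x, 0 <= f x} ->
         {ae mu, forall x, 0 <= P f x})].

Definition reversible (P : (T -> R) -> (T -> R)) : Prop :=
  forall f g, f \in L2 -> g \in L2 -> ip g (P f) = ip f (P g).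

Definition expansion_ratio (P : (T -> R) -> (T -> R)) (S : set T) : R :=
  fine (ip \1_S (P \1_(~` S))) / fine (mu S).

Definition bipartite_ratio (P : (T -> R) -> (T -> R)) (A B : set T) : R :=
  2 * fine (ip \1_A (P \1_B)) / fine (mu (A `|` B)).

Definition hP (P : (T -> R) -> (T -> R)) (k : nat) : \bar R :=
  ereal_inf [set r : \bar R | exists S : 'I_k -> set T,
    [/\ (forall i, measurable (S i)),
        (forall i, (0 < mu (S i))%E),
        (forall i j, i != j -> S i `&` S j = set0) &
        r = \big[Order.max/-oo%E]_(i < k) (expansion_ratio P (S i))%:E]].

Definition hbarP (P : (T -> R) -> (T -> R)) (k : nat) : \bar R :=
  ereal_sup [set r : \bar R | exists A B : 'I_k -> set T,
    [/\ (forall i, measurable (A i) /\ measurable (B i)),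
        (forall i, (0 < mu (A i `|` B i))%E),
        (forall i j, A i `&` B j = set0),
        (forall i j, i != j -> A i `&` A j = set0 /\ B i `&` B j = set0) &
        r = \big[Order.min/+oo%E]_(i < k) (bipartite_ratio P (A i) (B i))%:E]].

End MarkovDefs.

(* Main.v *)
Require Import Defs.
From HB Require Import structures.
From mathcomp Require Import all_boot all_order all_algebra.
From mathcomp Require Import all_classical all_reals all_analysis.
From mathcomp Require Import ring lra.
Import Order.TTheory GRing.Theory Num.Theory.
Local Open Scope classical_set_scope.
Local Open Scope ring_scope.

Section Core.
Context (d : measure_display) (T : measurableType d) (R : realType)
  (mu : probability T R) (P : (T -> R) -> (T -> R)).

Lemma indic_L2 {A : set T} : measurable A -> \1_A \in L2 mu.
Proof.
move=> mA; rewrite /L2 inE; apply/andP; split.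
  by rewrite inE /=; exact: measurable_realfun.measurable_indic.
rewrite inE /= /finite_norm unlock /=.
apply: poweR_lty.
have -> : (fun x => `|(EFin \o \1_A) x| `^ 2)%E = (fun x => (\1_A x)%:E :> \bar R).
  apply/funext => x /=; rewrite indicE; case: (x \in A) => /=.
  - by rewrite normr1 powR1.
  - by rewrite normr0 powR0.
rewrite integral_indic // setIT.
by rewrite ltey_eq fin_num_measure.
Qed.

Lemma L2_meas (f : T -> R) : f \in L2 mu -> measurable_fun setT f.
Proof. by move/sub_Lfun_mfun; rewrite inE. Qed.

Lemma L2_mul {f g : T -> R} : f \in L2 mu -> g \in L2 mu -> f \* g \in Lfun mu 1.
Proof. exact: Lfun2_mul_Lfun1. Qed.

Lemma ipE (f g : T -> R) : ip mu f g = ('E_mu[f \* g])%E.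
Proof. by rewrite unlock. Qed.


Lemma L1_meas (f : T -> R) : f \in Lfun mu 1 -> measurable_fun setT f.
Proof. by move/sub_Lfun_mfun; rewrite inE. Qed.

Lemma core (A B : set T) : measurable A -> measurable B -> A `&` B = set0 ->
  (0 < mu (A `|` B))%E -> markov_operator mu P -> reversible mu P ->
  expansion_ratio mu P (A `|` B) + bipartite_ratio mu P A B <= 1.
Proof.
move=> mA mB AB0 pos [PL2 _ Plin P1 Ppos] HR.
set S := A `|` B.
have mS : measurable S by exact: measurableU.
have mSc : measurable (~` S) by exact: measurableC.
have iA := indic_L2 mA; have iB := indic_L2 mB.
have iS := indic_L2 mS; have iSc := indic_L2 mSc.
have indS : forall x, \1_S x = \1_A x + \1_B x :> R.
  move=> x; rewrite !indicE /S in_setU.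
  case: (boolP (x \in A)) => xA; case: (boolP (x \in B)) => xB //=.
  - exfalso; have : (A `&` B) x by split; exact/set_mem.
    by rewrite AB0.
  - by rewrite addr0.
  - by rewrite add0r.
  - by rewrite addr0.
have indSc : forall x, \1_S x + \1_(~` S) x = 1 :> R.
  by move=> x; rewrite !indicE in_setC; case: (x \in S) => /=; rewrite ?addr0 ?add0r.
set u := P \1_A; set v := P \1_B; set w := P \1_(~` S).
have uL : u \in L2 mu := PL2 _ iA.
have vL : v \in L2 mu := PL2 _ iB.
have wL : w \in L2 mu := PL2 _ iSc.
have hs : {ae mu, forall x, P \1_S x = u x + v x}.
  have := Plin 1 _ _ iA iB.
  have -> : (fun y => 1 * \1_A y + \1_B y : R) = \1_S :> (T -> R).
    by apply: boolp.funext => y; rewrite mul1r indS.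
  by apply: filterS => x ->; rewrite mul1r.
have h1 : {ae mu, forall x, P \1_S x + w x = 1}.
  have := Plin 1 _ _ iS iSc.
  have -> : (fun y => 1 * \1_S y + \1_(~` S) y : R) = cst 1 :> (T -> R).
    by apply: boolp.funext => y; rewrite mul1r indSc.
  move=> H; apply: (filterS2 _ _ H P1) => x h2 h3.
  by rewrite -h3 h2 mul1r.
have hw : {ae mu, forall x, w x = 1 - u x - v x}.
  apply: (filterS2 _ _ hs h1) => x h2 h3.
  rewrite -h3 h2; ring.
have L1S : \1_S \in Lfun mu 1.
  have e : \1_S \* cst 1 = \1_S :> (T -> R) by apply: boolp.funext => y; rewrite /= mulr1.
  by rewrite -e; apply: L2_mul => //; exact: Lfun_cst.
have mAu := L2_mul iA uL; have mAv := L2_mul iA vL.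
have mBu := L2_mul iB uL; have mBv := L2_mul iB vL.
have hE : ip mu \1_S w = expectation mu ((((\1_S \- \1_A \* u) \- \1_A \* v) \- \1_B \* u) \- \1_B \* v)%R.
  rewrite ipE unlock; apply: ae_eq_integral => //.
  - apply/measurable_realfun.measurable_EFinP; apply: L1_meas; exact: L2_mul.
  - apply/measurable_realfun.measurable_EFinP; apply: L1_meas.
    by repeat apply: rpredB.
  - apply: filterS hw => x hx _ /=; congr EFin; rewrite hx indS; ring.
rewrite !expectationB // in hE; last first.
  by repeat apply: rpredB.
  by repeat apply: rpredB.
  by repeat apply: rpredB.
rewrite expectation_indic // in hE.
have fE : forall f, f \in Lfun mu 1 -> ('E_mu[f] = (fine 'E_mu[f])%:E)%E.
  by move=> f hf; rewrite fineK // expectation_fin_num.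
have mSfin : mu S = (fine (mu S))%:E by rewrite fineK // fin_num_measure.
have m0 : 0 < fine (mu S).
  by apply: fine_gt0; rewrite pos /= -ge0_fin_numE ?fin_num_measure // ltW.
have rev : fine ('E_mu[\1_B \* u])%E = fine ('E_mu[\1_A \* v])%E.
  by have := HR _ _ iA iB; rewrite !ipE => ->.
have nn : forall (C : set T), measurable C ->
    0 <= fine ('E_mu[\1_C \* P \1_C])%E.
  move=> C mC.
  have iC := indic_L2 mC.
  have pC := PL2 _ iC.
  have hp : {ae mu, forall x, 0 <= P \1_C x}.
    by apply: Ppos => //; apply: aeW => x; rewrite indicE ler0n.
  apply: fine_ge0.
  have -> : ('E_mu[\1_C \* P \1_C] =
      \int[mu]_x (\1_C x * Order.max (P \1_C x) 0)%:E)%E.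
    rewrite unlock; apply: ae_eq_integral => //.
    - apply/measurable_realfun.measurable_EFinP; apply: L1_meas; exact: L2_mul.
    - apply/measurable_realfun.measurable_EFinP.
      apply: measurable_realfun.measurable_funM.
        exact: measurable_realfun.measurable_indic.
      apply: measurable_realfun.measurable_maxr => //.
      exact: L2_meas.
    - apply: filterS hp => x hx _ /=; congr EFin.
      by rewrite /Order.max; case: ifPn => // h; rewrite ltNge hx in h.
  apply: integral_ge0 => x _; rewrite lee_fin mulr_ge0 //.
  by rewrite le_max lexx orbT.
have nA := nn _ mA; have nB := nn _ mB.
rewrite /expansion_ratio /bipartite_ratio -/S -/u -/v -/w hE ipE.
rewrite mSfin (fE _ mAu) (fE _ mAv) (fE _ mBu) (fE _ mBv) -!EFinB /=.
rewrite rev.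
rewrite -mulrDl ler_pdivrMr // mul1r.
move: nA nB; rewrite -/u -/v.
lra.
Qed.


End Core.

Theorem proposition8p3 (d : measure_display) (T : measurableType d)
  (R : realType) (mu : probability T R) (P : (T -> R) -> (T -> R)) :
  L2_infinite_dimensional mu ->
  markov_operator mu P -> reversible mu P ->
  forall k : nat, (1 <= k)%N -> (hP mu P k + hbarP mu P k <= 1)%E.
Proof.
move=> _ HM HR k k1.
rewrite /hP /hbarP.
set Sset := [set r | _].
set Bset := [set r | _].
have key : forall r, Bset r -> exists2 h, Sset h & ((h + r <= 1)%E /\ (h < +oo)%E).
  move=> r [A [B [mAB pos dAB dij ->]]].
  exists (\big[Order.max/-oo%E]_(i < k) (expansion_ratio mu P (A i `|` B i))%:E).
    exists (fun i => A i `|` B i); split => //.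
    - by move=> i; have [mA mB] := mAB i; exact: measurableU.
    - move=> i j ij; have [AA BB] := dij i j ij.
      rewrite setIUl !setIUr AA BB (dAB i j) [B i `&` A j]setIC (dAB j i).
      by rewrite !setU0.
  split.
  - apply: (big_ind (fun x => x + \big[Order.min/+oo%E]_(i < k) (bipartite_ratio mu P (A i) (B i))%:E <= 1)%E).
    + by rewrite addNye leNye.
    + by move=> x y Hx Hy; rewrite /Order.max; case: ifP.
    + move=> i _.
      apply: (@le_trans _ _ ((expansion_ratio mu P (A i `|` B i))%:E
          + (bipartite_ratio mu P (A i) (B i))%:E)%E).
        by apply: leeD2l; exact: bigmin_le.
      rewrite -EFinD lee_fin.
      have [mA mB] := mAB i.
      exact: core.
  - apply: (big_ind (fun x => x < +oo)%E) => //.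
    + by move=> x y Hx Hy; rewrite /Order.max; case: ifP.
    + by move=> i _; exact: ltry.
have [B0|/set0P [r0 Br0]] := eqVneq Bset set0.
  by rewrite B0 ereal_sup0 addeNy leNye.
have [h0 Sh0 [_ h0oo]] := key r0 Br0.
have hle : forall h, Sset h -> (ereal_inf Sset <= h)%E by move=> h; exact: ereal_inf_lbound.
have := hle h0 Sh0.
case E : (ereal_inf Sset) => [hr| |] //.
  move=> _.
  have hub : (ereal_sup Bset <= (1 - hr)%:E)%E.
    apply: ge_ereal_sup => r Br.
    have [h Sh [hr1 _]] := key r Br.
    have : (hr%:E + r <= 1)%E.
      by apply: le_trans hr1; apply: leeD2r; rewrite -E; exact: hle.
    case: r {Br hr1} => [r| |].
    - by rewrite -EFinD !lee_fin => H; lra.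
    - by rewrite addey // leye_eq.
    - by move=> _; exact: leNye.
  apply: (le_trans (leeD2l _ hub)).
  by rewrite -EFinD lee_fin; lra.
- by move=> H; move: (le_lt_trans H h0oo); rewrite ltxx.
- by move=> _; rewrite addNye leNye.
Qed.
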